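(* Assume that $K\subset\mathbb{R}^d$ is a convex parameter space with finite diameter, and that $V\subset K$ is a measurable set satisfying $\lim_{\epsilon\to0}\mathrm{vol}(V_\epsilon)<\mathrm{vol}(K)$. Then for any bounded function $f:K\to\mathbb{R}$, the restricted Cheeger constant $\mathcal{C}_f(V)$ is strictly positive.
   Context: $\mathrm{vol}$ is Lebesgue (Borel) measure; $V_\epsilon=\{x\in K:\inf_{y\in V}\|x-y\|_2\le\epsilon\}$. $\mu_f$ is the probability measure on $K$ with density $e^{-f(x)}/\int_Ke^{-f(y)}dy$; for $V\subset K$, $\mathcal{C}_f(V):=\liminf_{\epsilon\searrow0}\inf_{A\subset V}\frac{\mu_f(A_\epsilon)-\mu_f(A)}{\epsilon\,\mu_f(A)}$, where $A_\epsilon=\{x\in K:\inf_{y\in A}\|x-y\|_2\le\epsilon\}$. *)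

(* Defs.v *)
From mathcomp Require Import all_boot all_order all_algebra.
From mathcomp Require Import all_classical all_reals all_analysis.
Set Implicit Arguments. Unset Strict Implicit. Unset Printing Implicit Defensive.
Import Order.TTheory GRing.Theory Num.Theory.
Import numFieldNormedType.Exports.
Local Open Scope classical_set_scope.
Local Open Scope ring_scope.

Section Defs.
Variables (R : realType) (d : nat).
Notation Rd := 'rV[R]_d.

Definition norm2 (x : Rd) : R := Num.sqrt (\sum_(i < d) (x 0 i) ^+ 2).
Definition dist2 (x y : Rd) : R := norm2 (x - y).

Definition box (ab : option (Rd * Rd)) : set Rd :=
  match ab with
  | None => set0
  | Some (a, b) => [set x | forall i : 'I_d, a 0 i <= x 0 i <= b 0 i]
  end.
Definition boxvol (ab : option (Rd * Rd)) : R :=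
  match ab with
  | None => 0
  | Some (a, b) => \prod_(i < d) Num.max 0 (b 0 i - a 0 i)
  end.

(* d-dimensional Lebesgue (outer) measure: infimum of total volumes of
   countable box covers.  On Lebesgue measurable sets this is vol. *)
Definition vol (A : set Rd) : \bar R :=
  ereal_inf [set (\sum_(0 <= n <oo) (boxvol (c n))%:E)%E
            | c in [set c : nat -> option (Rd * Rd) |
                    A `<=` \bigcup_n box (c n)]].

Definition Lmeasurable (A : set Rd) : Prop := vol.-caratheodory A.

(* Integral of exp(-f) over A w.r.t. vol, by the layer-cake formula
   \int_A g dvol = \int_0^oo vol({x in A | g x > t}) dt  (g >= 0). *)
Definition int_expmf (f : Rd -> R) (A : set Rd) : \bar R :=
  (\int[@lebesgue_measure R]_(t in `[0%R, +oo[%classic)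
      vol [set x | A x /\ (t < expR (- f x))%R])%E.

Definition mu_f (K : set Rd) (f : Rd -> R) (A : set Rd) : R :=
  fine (int_expmf f A) / fine (int_expmf f K).

Definition enlarge (K A : set Rd) (eps : R) : set Rd :=
  [set x | K x /\ (ereal_inf [set (dist2 x y)%:E | y in A] <= eps%:E)%E].

Definition finite_diameter (K : set Rd) : Prop :=
  exists D : R, forall x y, K x -> K y -> dist2 x y <= D.

(* restricted Cheeger constant C_f(V) =
   liminf_{eps -> 0+} inf_{A subset V, A measurable, mu_f(A) > 0}
        (mu_f(A_eps) - mu_f(A)) / (eps mu_f(A)) *)
Definition cheeger_ratio (K : set Rd) (f : Rd -> R) (V : set Rd) (eps : R)
  : \bar R :=
  ereal_inf [set ((mu_f K f (enlarge K A eps) - mu_f K f A)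
                  / (eps * mu_f K f A))%:E
            | A in [set A | A `<=` V /\ Lmeasurable A /\ 0 < mu_f K f A]].

Definition cheeger (K : set Rd) (f : Rd -> R) (V : set Rd) : \bar R :=
  ereal_sup [set ereal_inf [set cheeger_ratio K f V e | e in `]0%R, delta[]
            | delta in `]0%R, +oo[].

End Defs.

(* Main.v *)
Require Import Defs.
From mathcomp Require Import all_boot all_order all_algebra.
From mathcomp Require Import all_classical all_reals all_analysis.
From mathcomp Require Import measurable_realfun.
From mathcomp Require Import ring lra.
Import Order.TTheory GRing.Theory Num.Theory.
Import numFieldNormedType.Exports.
Local Open Scope classical_set_scope.
Local Open Scope ring_scope.

Set Implicit Arguments. Unset Strict Implicit. Unset Printing Implicit Defensive.

Lemma boxvol_ge0 (R : realType) (d : nat) (ab : option ('rV[R]_d * 'rV[R]_d)) :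
  0 <= boxvol ab.
Proof.
case: ab => [[a b]|] //=; apply: prodr_ge0 => i _; by rewrite le_max lexx.
Qed.

Lemma vol_ge0 (R : realType) (d : nat) (A : set 'rV[R]_d) : (0 <= vol A)%E.
Proof.
rewrite /vol; apply: le_ereal_inf_tmp => _ [c _ <-].
by apply: nneseries_ge0 => n _ _; rewrite lee_fin boxvol_ge0.
Qed.

Lemma le_vol (R : realType) (d : nat) (A B : set 'rV[R]_d) :
  A `<=` B -> (vol A <= vol B)%E.
Proof.
move=> AB; rewrite /vol; apply: ereal_inf_le_tmp => _ [c Bc <-].
by exists c => //; exact: subset_trans AB Bc.
Qed.

Definition hmap (R : realType) (d : nat) (y : 'rV[R]_d) (mu : R) (x : 'rV[R]_d) :=
  y + mu *: (x - y).

Lemma hmapE (R : realType) (d : nat) (y : 'rV[R]_d) mu x i :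
  hmap y mu x 0 i = y 0 i + mu * (x 0 i - y 0 i).
Proof. by rewrite /hmap !mxE. Qed.

Definition hbox (R : realType) (d : nat) (y : 'rV[R]_d) (mu : R)
  (ab : option ('rV[R]_d * 'rV[R]_d)) :=
  match ab with None => None | Some (a, b) => Some (hmap y mu a, hmap y mu b) end.

Lemma hbox_box (R : realType) (d : nat) (y : 'rV[R]_d) (mu : R) ab x :
  0 < mu -> box ab x -> box (hbox y mu ab) (hmap y mu x).
Proof.
move=> mu0; case: ab => [[a b]|] //= H i; rewrite !hmapE.
have /andP[h1 h2] := H i.
by apply/andP; split; rewrite lerD2l ler_pM2l // lerD2r.
Qed.

Lemma hbox_vol (R : realType) (d : nat) (y : 'rV[R]_d) (mu : R) ab :
  0 < mu -> boxvol (hbox y mu ab) = mu ^+ d * boxvol ab.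
Proof.
move=> mu0; case: ab => [[a b]|] /=; last by rewrite mulr0.
have -> : mu ^+ d = \prod_(i < d) mu by rewrite prodr_const card_ord.
rewrite -big_split /=.
apply: eq_bigr => i _; rewrite !hmapE.
have -> : y 0 i + mu * (b 0 i - y 0 i) - (y 0 i + mu * (a 0 i - y 0 i))
   = mu * (b 0 i - a 0 i) by ring.
by rewrite maxr_pMr ?ltW // mulr0.
Qed.

Lemma vol_hmap_le (R : realType) (d : nat) (y : 'rV[R]_d) (mu : R) S :
  0 < mu -> (vol (hmap y mu @` S) <= (mu ^+ d)%:E * vol S)%E.
Proof.
move=> mu0.
have md : 0 < mu ^+ d by rewrite exprn_gt0.
have key : forall c : nat -> option ('rV[R]_d * 'rV[R]_d),
    S `<=` \bigcup_n box (c n) ->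
    (vol (hmap y mu @` S) <= (mu ^+ d)%:E * \sum_(0 <= n <oo) (boxvol (c n))%:E)%E.
  move=> c Sc; rewrite -nneseriesZl; last by move=> i _; rewrite lee_fin boxvol_ge0.
  apply: ereal_inf_lbound; exists (fun n => hbox y mu (c n)).
    move=> _ [x Sx <-]; have [n _ bn] := Sc x Sx.
    by exists n => //; exact: hbox_box.
  by apply: eq_eseriesr => n _; rewrite hbox_vol.
have H : ((mu ^+ d)^-1%:E * vol (hmap y mu @` S) <= vol S)%E.
  apply: le_ereal_inf_tmp => _ [c Sc <-].
  have i0 : (0 <= ((mu ^+ d)^-1)%:E)%E by rewrite lee_fin invr_ge0 ltW.
  apply: le_trans (lee_wpmul2l i0 (key c Sc)) _.
  by rewrite muleA -EFinM mulVf ?mul1e // gt_eqF.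
have -> : vol (hmap y mu @` S) =
    ((mu ^+ d)%:E * ((mu ^+ d)^-1%:E * vol (hmap y mu @` S)))%E.
  by rewrite muleA -EFinM divff ?mul1e // gt_eqF.
by apply: lee_wpmul2l => //; rewrite lee_fin ltW.
Qed.

Lemma hmap_comp (R : realType) (d : nat) (y : 'rV[R]_d) a b x :
  hmap y a (hmap y b x) = hmap y (a * b) x.
Proof. by apply/rowP => i; rewrite !hmapE; ring. Qed.

Lemma hmap1 (R : realType) (d : nat) (y : 'rV[R]_d) x : hmap y 1 x = x.
Proof. by apply/rowP => i; rewrite !hmapE; ring. Qed.

Lemma hmap_inv (R : realType) (d : nat) (y : 'rV[R]_d) mu x :
  mu != 0 -> hmap y mu^-1 (hmap y mu x) = x.
Proof. by move=> mu0; rewrite hmap_comp mulVf // hmap1. Qed.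

Lemma hmap_invr (R : realType) (d : nat) (y : 'rV[R]_d) mu x :
  mu != 0 -> hmap y mu (hmap y mu^-1 x) = x.
Proof. by move=> mu0; rewrite hmap_comp mulfV // hmap1. Qed.

Lemma image_hmap_inv (R : realType) (d : nat) (y : 'rV[R]_d) mu S :
  mu != 0 -> hmap y mu^-1 @` (hmap y mu @` S) = S.
Proof.
move=> mu0; apply/seteqP; split.
  by move=> _ [_ [x Sx <-] <-]; rewrite hmap_inv.
by move=> x Sx; exists (hmap y mu x); [exists x|rewrite hmap_inv].
Qed.

Lemma vol_hmap (R : realType) (d : nat) (y : 'rV[R]_d) (mu : R) S :
  0 < mu -> vol (hmap y mu @` S) = ((mu ^+ d)%:E * vol S)%E.
Proof.
move=> mu0; apply/le_anti/andP; split; first exact: vol_hmap_le.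
have mi : 0 < mu^-1 by rewrite invr_gt0.
have := vol_hmap_le y (hmap y mu @` S) mi.
rewrite image_hmap_inv ?gt_eqF // => H.
have md : 0 < mu ^+ d by rewrite exprn_gt0.
have -> : vol (hmap y mu @` S) =
    ((mu ^+ d)%:E * ((mu^-1 ^+ d)%:E * vol (hmap y mu @` S)))%E.
  by rewrite muleA -EFinM exprVn divff ?mul1e // gt_eqF.
by apply: lee_wpmul2l => //; rewrite lee_fin ltW.
Qed.

Lemma Lmeasurable_hmap (R : realType) (d : nat) (y : 'rV[R]_d) (mu : R) A :
  0 < mu -> Lmeasurable A -> Lmeasurable (hmap y mu @` A).
Proof.
move=> mu0 mA X.
have m0 : mu != 0 by rewrite gt_eqF.
set X' := hmap y mu^-1 @` X.
have XE : X = hmap y mu @` X'.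
  by rewrite /X' -{1}(image_hmap_inv y X (invr_neq0 m0)) invrK.
have E1 : hmap y mu @` (X' `&` A) = X `&` hmap y mu @` A.
  apply/seteqP; split.
    move=> _ [x' [[x Xx <-] Ax'] <-]; split; last by exists (hmap y mu^-1 x).
    by rewrite hmap_invr.
  move=> z [Xz [a Aa az]]; exists a => //; split => //.
  by exists z => //; rewrite -az hmap_inv.
have E2 : hmap y mu @` (X' `&` ~` A) = X `&` ~` (hmap y mu @` A).
  apply/seteqP; split.
    move=> _ [x' [[x Xx <-] nA] <-]; split; first by rewrite hmap_invr.
    move=> [a Aa]; rewrite hmap_invr // => ax; apply: nA.
    by rewrite -ax hmap_inv.
  move=> z [Xz nz]; exists (hmap y mu^-1 z); last by rewrite hmap_invr.
  split; first by exists z.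
  by move=> Ah; apply: nz; exists (hmap y mu^-1 z) => //; rewrite hmap_invr.
rewrite -E1 -E2 !vol_hmap // XE vol_hmap // (mA X') ge0_muleDr //; exact: vol_ge0.
Qed.

Lemma norm2_scale (R : realType) (d : nat) (mu : R) (v : 'rV[R]_d) :
  norm2 (mu *: v) = `|mu| * norm2 v.
Proof.
rewrite /norm2.
have -> : \sum_(i < d) ((mu *: v) 0 i) ^+ 2 = mu ^+ 2 * \sum_(i < d) (v 0 i) ^+ 2.
  by rewrite mulr_sumr; apply: eq_bigr => i _; rewrite mxE exprMn.
by rewrite sqrtrM ?sqr_ge0 // sqrtr_sqr.
Qed.

Lemma norm2N (R : realType) (d : nat) (v : 'rV[R]_d) : norm2 (- v) = norm2 v.
Proof. by rewrite -scaleN1r norm2_scale normrN normr1 mul1r. Qed.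

Lemma norm2_ge0 (R : realType) (d : nat) (v : 'rV[R]_d) : 0 <= norm2 v.
Proof. exact: sqrtr_ge0. Qed.

Lemma dist2C (R : realType) (d : nat) (x y : 'rV[R]_d) : dist2 x y = dist2 y x.
Proof. by rewrite /dist2 -norm2N opprB. Qed.

Lemma dist2_hmap_c (R : realType) (d : nat) (y x : 'rV[R]_d) mu :
  dist2 (hmap y mu x) y = `|mu| * dist2 x y.
Proof. by rewrite /dist2 /hmap addrC addKr norm2_scale. Qed.

Lemma dist2_hmap_x (R : realType) (d : nat) (y x : 'rV[R]_d) mu :
  dist2 (hmap y mu x) x = `|mu - 1| * dist2 x y.
Proof.
rewrite /dist2 -norm2_scale; congr norm2; apply/rowP => i; rewrite !mxE; ring.
Qed.

Lemma lamk_small (R : realType) (D rho eps : R) (k : nat) :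
  0 < D -> 0 < rho -> 0 < eps -> eps <= D -> D ^+ 2 / rho < k%:R * eps ->
  (1 - eps / D) ^+ k * D < rho.
Proof.
move=> D0 r0 e0 eD hk.
have t0 : 0 <= eps / D by rewrite divr_ge0 // ltW.
have t1 : eps / D <= 1 by rewrite ler_pdivrMr // mul1r.
have l0 : 0 <= 1 - eps / D by rewrite subr_ge0.
have h1 : 1 - eps / D <= expR (- (eps / D)).
  by have := expR_ge1Dx (- (eps / D)).
have h2 : (1 - eps / D) ^+ k <= expR (k%:R * - (eps / D)).
  rewrite expRM_natl; apply: lerXn2r => //; rewrite ?nnegrE //; exact: ltW (expR_gt0 _).
have h3 : expR (k%:R * - (eps / D)) < expR (- (D / rho)).
  rewrite ltr_expR mulrN ltrN2 mulrA ltr_pdivlMr //.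
  by move: hk; rewrite expr2 mulrAC.
have h4 : expR (- (D / rho)) * D < rho.
  rewrite expRN mulrC ltr_pdivrMr ?expR_gt0 //.
  apply: lt_le_trans (ler_wpM2l (ltW r0) (expR_ge1Dx (D / rho))).
  rewrite mulrDr mulr1 mulrC divfK ?gt_eqF //; lra.
apply: le_lt_trans h4; apply: ler_wpM2r; first exact: ltW.
exact: le_trans h2 (ltW h3).
Qed.

Lemma lamk_big (R : realType) (D eps B : R) (k d : nat) :
  0 < D -> 0 < eps -> eps <= D / 2 -> k%:R * eps <= B ->
  expR (- (2 * B * d%:R / D)) <= (1 - eps / D) ^+ (k * d).
Proof.
move=> D0 e0 eD hk.
set t := eps / D.
have t0 : 0 <= t by rewrite divr_ge0 // ltW.
have t1 : t <= 1 / 2 by rewrite /t ler_pdivrMr //; lra.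
have h1 : expR (- (2 * t)) <= 1 - t.
  rewrite expRN -div1r ler_pdivrMr ?expR_gt0 //.
  apply: le_trans (ler_wpM2l _ (expR_ge1Dx (2 * t))); last lra.
  nra.
have h2 : expR ((k * d)%:R * - (2 * t)) <= (1 - t) ^+ (k * d).
  rewrite expRM_natl; apply: lerXn2r => //; rewrite ?nnegrE ?expR_ge0 //.
  lra.
apply: le_trans h2; rewrite ler_expR mulrN lerN2.
have -> : (k * d)%:R * (2 * t) = 2 * (k%:R * eps) * d%:R / D.
  by rewrite /t natrM; ring.
apply: ler_wpM2r; first by rewrite invr_ge0 ltW.
apply: ler_wpM2r => //; apply: ler_wpM2l => //.
Qed.

Local Open Scope convex_scope.

Lemma vol0 (R : realType) (d : nat) : vol (set0 : set 'rV[R]_d) = 0%E.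
Proof.
apply/le_anti/andP; split; last exact: vol_ge0.
apply: ereal_inf_lbound; exists (fun _ => None) => //.
by rewrite eseries0.
Qed.

Lemma vol_chain (R : realType) (d : nat) (T : nat -> set 'rV[R]_d) (m : \bar R) :
  (forall j, Lmeasurable (T j)) -> (forall j, (vol (T j.+1 `\` T j) <= m)%E) ->
  forall k, (vol (T k `\` T 0%N) <= k%:R%:E * m)%E.
Proof.
move=> mT hm; have m0 : (0 <= m)%E := le_trans (vol_ge0 _) (hm 0%N).
elim=> [|k IH]; first by rewrite setDv mul0e vol0.
rewrite (mT k (T k.+1 `\` T 0%N)).
apply: le_trans (leeD (le_vol (_ : _ `<=` T k `\` T 0%N))
                      (le_vol (_ : _ `<=` T k.+1 `\` T k))) _.
- by move=> x [[? ?] ?].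
- by move=> x [[? ?] ?].
rewrite -natr1 EFinD ge0_muleDl ?mul1e ?lee_fin //; exact: leeD IH (hm k).
Qed.

Lemma convex_hmap (R : realType) (d : nat) (K : set 'rV[R]_d) y a lam :
  convex_set K -> K y -> K a -> 0 <= lam -> lam <= 1 -> K (hmap y lam a).
Proof.
move=> cK Ky Ka l0 l1.
have := cK a y (Itv01 l0 l1) (mem_set Ka) (mem_set Ky).
have -> : (a : convex_lmodType _) <| Itv01 l0 l1 |> y = hmap y lam a.
  by apply/rowP => i; rewrite !mxE /= /unstable.onem; ring.
by move/set_mem.
Qed.

Lemma geom (R : realType) (d : nat) (K V A : set 'rV[R]_d) (y : 'rV[R]_d)
    (rho D eps : R) :
  convex_set K -> K y -> 0 < rho -> (forall v, V v -> rho < dist2 y v) ->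
  0 < D -> (forall x, K x -> dist2 x y <= D) -> A `<=` V -> V `<=` K ->
  Lmeasurable A -> 0 < eps -> eps <= D / 2 ->
  (((expR (- (2 * (D ^+ 2 / rho + D) * d%:R / D))) / (D ^+ 2 / rho + D) * eps)%:E
     * vol A <= vol (enlarge K A eps `\` A))%E.
Proof.
move=> cK Ky r0 Vy D0 KD AV VK mA e0 eD.
set C := D ^+ 2 / rho.
have C0 : 0 <= C by rewrite divr_ge0 ?sqr_ge0 // ltW.
have eD' : eps <= D by lra.
set lam := 1 - eps / D.
have l0 : 0 < lam by rewrite /lam subr_gt0 ltr_pdivrMr // mul1r; lra.
have l1 : lam <= 1 by rewrite /lam gerBl divr_ge0 // ltW.
set k := (Num.trunc (C / eps)).+1.
have [hk1 hk2] : C < k%:R * eps /\ k%:R * eps <= C + D.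
  have := truncn_itv (divr_ge0 C0 (ltW e0)) => /andP[t1 t2].
  split; first by rewrite -ltr_pdivrMr.
  rewrite /k -natr1 mulrDl mul1r; apply: lerD => //.
  by rewrite -ler_pdivlMr.
set T := fun j => hmap y (lam ^+ j) @` A.
have T0 : T 0%N = A.
  rewrite /T expr0; apply/seteqP; split => [_ [a Aa <-]|a Aa].
    by rewrite hmap1.
  by exists a; rewrite ?hmap1.
have mT j : Lmeasurable (T j) := Lmeasurable_hmap y (exprn_gt0 j l0) mA.
have T1E : T 1%N `<=` enlarge K A eps.
  move=> _ [a Aa <-]; rewrite expr1; split.
    by apply: convex_hmap => //; [exact: VK (AV a Aa) | exact: ltW].
  apply: le_trans (ereal_inf_lbound _) _; first by exists a.
  rewrite lee_fin dist2_hmap_x.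
  have -> : lam - 1 = - (eps / D) by rewrite /lam; ring.
  rewrite normrN ger0_norm; last by rewrite divr_ge0 // ltW.
  apply: (@le_trans _ _ (eps / D * D)); last by rewrite divfK ?gt_eqF.
  apply: ler_wpM2l; first by rewrite divr_ge0 ?ltW.
  exact: KD a (VK a (AV a Aa)).
have Tstep j : T j.+1 `\` T j `<=` hmap y (lam ^+ j) @` (T 1%N `\` A).
  move=> _ [[a Aa <-] nT]; exists (hmap y lam a).
    split; first by exists a; rewrite ?expr1.
    move=> Aha; apply: nT; exists (hmap y lam a) => //.
    by rewrite hmap_comp -exprSr.
  by rewrite hmap_comp -exprSr.
have Tm j : (vol (T j.+1 `\` T j) <= vol (T 1%N `\` A))%E.
  apply: le_trans (le_vol (Tstep j)) _; rewrite vol_hmap ?exprn_gt0 //.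
  rewrite -[X in (_ <= X)%E]mul1e; apply: lee_wpmul2r; first exact: vol_ge0.
  rewrite lee_fin; apply: exprn_ile1; first exact/ltW/exprn_gt0.
  exact: exprn_ile1 (ltW l0) l1.
have Tk : T k `\` T 0%N = T k.
  rewrite T0; apply/seteqP; split => [z [] //|z Tz]; split => // Az.
  case: Tz => a Aa az.
  have H := Vy _ (AV _ Az).
  move: H; rewrite dist2C -az dist2_hmap_c ger0_norm ?exprn_ge0 ?ltW // => H.
  have H2 : lam ^+ k * dist2 a y < rho.
    apply: le_lt_trans (lamk_small D0 r0 e0 eD' hk1).
    apply: ler_wpM2l; first exact/ltW/exprn_gt0.
    exact: KD a (VK a (AV a Aa)).
  by have := lt_trans H H2; rewrite ltxx.
have chain := vol_chain mT Tm k.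
rewrite Tk in chain.
have volTk : vol (T k) = (((lam ^+ k) ^+ d)%:E * vol A)%E.
  exact: vol_hmap (exprn_gt0 _ l0).
have Lb : ((expR (- (2 * (C + D) * d%:R / D)))%:E <= ((lam ^+ k) ^+ d)%:E)%E.
  by rewrite lee_fin -exprM; exact: lamk_big D0 e0 eD hk2.
have main : ((expR (- (2 * (C + D) * d%:R / D)))%:E * vol A
    <= k%:R%:E * vol (enlarge K A eps `\` A))%E.
  apply: le_trans (lee_wpmul2r (vol_ge0 A) Lb) _.
  rewrite -volTk; apply: le_trans chain _; apply: lee_wpmul2l.
    by rewrite lee_fin ler0n.
  by apply: le_vol => z [T1z nA]; split => //; exact: T1E.
have CD : 0 < C + D by rewrite ltr_wpDl.
rewrite (_ : expR (- (2 * (C + D) * d%:R / D)) / (C + D) * eps =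
    (eps / (C + D)) * expR (- (2 * (C + D) * d%:R / D))); last by ring.
rewrite EFinM -muleA.
have e1 : (0 <= (eps / (C + D))%:E)%E by rewrite lee_fin divr_ge0 ?ltW.
apply: le_trans (lee_wpmul2l e1 main) _.
rewrite muleA -EFinM -[X in (_ <= X)%E]mul1e.
apply: lee_wpmul2r; first exact: vol_ge0.
by rewrite lee_fin mulrAC ler_pdivrMr // mul1r mulrC.
Qed.

Local Close Scope convex_scope.

Lemma coord_le_norm2 (R : realType) (d : nat) (v : 'rV[R]_d) i :
  `|v 0 i| <= norm2 v.
Proof.
rewrite /norm2 -sqrtr_sqr; apply: ler_wsqrtr.
rewrite (bigD1 i) //= lerDl; apply: sumr_ge0 => j _; exact: sqr_ge0.
Qed.

Lemma vol_fin (R : realType) (d : nat) (K : set 'rV[R]_d) y D :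
  (forall x, K x -> dist2 x y <= D) -> (vol K < +oo)%E.
Proof.
move=> KD.
apply: (@le_lt_trans _ _ (boxvol (Some (y - const_mx D, y + const_mx D)))%:E);
  last exact: ltry.
apply: ereal_inf_lbound.
pose bx : option ('rV[R]_d * 'rV[R]_d) := Some (y - const_mx D, y + const_mx D).
exists (fun n : nat => if n == 0%N then bx else None).
  move=> x Kx; exists 0%N => // i.
  have := le_trans (coord_le_norm2 (x - y) i) (KD x Kx).
  rewrite !mxE ler_norml => /andP[h1 h2]; apply/andP; split; lra.
rewrite (nneseries_split _ 1); last by move=> k _; rewrite lee_fin boxvol_ge0.
rewrite big_nat1 /= eseries0 ?adde0 // => k k1 _.
by case: k k1.
Qed.

Definition phi (R : realType) (d : nat) (f : 'rV[R]_d -> R) (S : set 'rV[R]_d)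
  (t : R) : \bar R := vol [set x | S x /\ t < expR (- f x)].

Lemma phi_fin (R : realType) (d : nat) (f : 'rV[R]_d -> R) (S : set 'rV[R]_d) t :
  (vol S < +oo)%E -> phi f S t \is a fin_num.
Proof.
move=> hS; rewrite ge0_fin_numE ?vol_ge0 //.
by apply: le_lt_trans hS; apply: le_vol => x [].
Qed.

Lemma phi_meas (R : realType) (d : nat) (f : 'rV[R]_d -> R) (S : set 'rV[R]_d) :
  (vol S < +oo)%E -> measurable_fun (`[0%R, +oo[ : set R) (phi f S).
Proof.
move=> hS.
have -> : phi f S = EFin \o (fun t => fine (phi f S t)).
  by apply/funext => t /=; rewrite fineK // phi_fin.
apply/measurable_EFinP; apply: nonincreasing_measurable; first exact: measurable_itv.
move=> s t st; apply: fine_le; rewrite ?phi_fin //.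
by apply: le_vol => x [Sx tx]; split => //; exact: le_lt_trans st tx.
Qed.

Lemma int_expmfE (R : realType) (d : nat) (f : 'rV[R]_d -> R) (S : set 'rV[R]_d) :
  int_expmf f S = (\int[@lebesgue_measure R]_(t in `[0%R, +oo[) phi f S t)%E.
Proof. by []. Qed.

Lemma int_lb (R : realType) (d : nat) (f : 'rV[R]_d -> R) (S : set 'rV[R]_d) a :
  0 < a -> (forall x, S x -> a <= expR (- f x)) -> (vol S < +oo)%E ->
  (a%:E * vol S <= int_expmf f S)%E.
Proof.
move=> a0 Sa hS; rewrite int_expmfE.
have mi : measurable (`[0%R, a[ : set R) by exact: measurable_itv.
have sub : (`[0%R, a[ : set R) `<=` `[0%R, +oo[.
  by move=> t /=; rewrite !in_itv /= andbT => /andP[].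
apply: (@le_trans _ _ (\int[@lebesgue_measure R]_(t in `[0%R, a[) phi f S t)%E).
  have -> : (a%:E * vol S = \int[@lebesgue_measure R]_(t in `[0%R, a[) (cst (vol S)) t)%E.
    rewrite integral_cst // muleC; congr (_ * _)%E.
    have := lebesgue_measure_itv `[0%R, a[.
    rewrite /= lte_fin a0 sube0 => <- //.
  apply: ge0_le_integral => //.
  - by move=> t _; exact: vol_ge0.
  - by apply: (measurable_funS _ sub (phi_meas f hS)); exact: measurable_itv.
  - move=> t /=; rewrite in_itv /= => /andP[_ ta].
    by apply: le_vol => x Sx; split => //; exact: lt_le_trans ta (Sa x Sx).
apply: ge0_subset_integral.
- exact: measurable_itv.
- exact: measurable_itv.
- exact: phi_meas.
- by move=> t _; exact: vol_ge0.
- exact: sub.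
Qed.

Lemma int_ub (R : realType) (d : nat) (f : 'rV[R]_d -> R) (S : set 'rV[R]_d) b :
  0 < b -> (forall x, S x -> expR (- f x) <= b) -> (vol S < +oo)%E ->
  (int_expmf f S <= b%:E * vol S)%E.
Proof.
move=> b0 Sb hS; rewrite int_expmfE.
have U : (`[0%R, +oo[%classic : set R) = `[0%R, b[%classic `|` `[b, +oo[%classic.
  apply/seteqP; split => t /=; rewrite !in_itv /= ?andbT.
    by move=> t0; case: (ltP t b) => tb; [left|right]; rewrite ?andbT.
  case; first by case/andP.
  by move=> bt; exact: le_trans (ltW b0) bt.
rewrite U integral_setU //; last 2 first.
- by rewrite -U; exact: phi_meas.
- apply/disj_setPS => t [] /=; rewrite !in_itv /= andbT => /andP[_ tb] bt.
  by have := lt_le_trans tb bt; rewrite ltxx.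
rewrite [X in (_ + X <= _)%E]integral0_eq ?adde0; last first.
  move=> t /=; rewrite in_itv /= andbT => bt.
  rewrite /phi (_ : [set x | S x /\ t < expR (- f x)] = set0) ?vol0 //.
  apply/seteqP; split => x // [Sx tx].
  by have := lt_le_trans tx (le_trans (Sb x Sx) bt); rewrite ltxx.
apply: (@le_trans _ _ (\int[@lebesgue_measure R]_(t in `[0%R, b[) (cst (vol S)) t)%E).
  have sub : (`[0%R, b[%classic : set R) `<=` `[0%R, +oo[%classic.
    by move=> t /=; rewrite !in_itv /= andbT => /andP[].
  apply: ge0_le_integral => //.
  - by move=> t _; exact: vol_ge0.
  - by apply: (measurable_funS _ sub (phi_meas f hS)); exact: measurable_itv.
  - by move=> t _; apply: le_vol => x [].
rewrite integral_cst; last exact: measurable_itv.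
rewrite [X in (_ <= X)%E]muleC; apply: lee_wpmul2l; first exact: vol_ge0.
have := lebesgue_measure_itv `[0%R, b[.
by rewrite /= lte_fin b0 sube0 => <-.
Qed.

Lemma int_split (R : realType) (d : nat) (f : 'rV[R]_d -> R) (A B : set 'rV[R]_d) :
  A `<=` B -> Lmeasurable A -> (vol B < +oo)%E ->
  int_expmf f B = (int_expmf f A + int_expmf f (B `\` A))%E.
Proof.
move=> AB mA hB.
have hA : (vol A < +oo)%E by apply: le_lt_trans hB; exact: le_vol.
have hBA : (vol (B `\` A) < +oo)%E by apply: le_lt_trans hB; apply: le_vol => x [].
rewrite !int_expmfE -ge0_integralD //; last 4 first.
- by move=> t _; exact: vol_ge0.
- exact: phi_meas.
- by move=> t _; exact: vol_ge0.
- exact: phi_meas.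
apply: eq_integral => t _; rewrite /phi (mA [set x | B x /\ t < expR (- f x)]).
apply: (f_equal2 (fun a b => (a + b)%E)); congr vol; apply/seteqP; split => x /=.
- by move=> [[]].
- by move=> [Ax tx]; split => //; split => //; exact: AB.
- by move=> [[Bx tx] nA].
- by move=> [[Bx nA] tx].
Qed.

Lemma dist2xx (R : realType) (d : nat) (x : 'rV[R]_d) : dist2 x x = 0.
Proof.
by rewrite /dist2 subrr /norm2 big1 ?sqrtr0 // => i _; rewrite mxE expr0n.
Qed.

Unset Implicit Arguments.

Theorem proposition4 (R : realType) (d : nat) (K V : set 'rV[R]_d)
  (f : 'rV[R]_d -> R) :
  convex_set K -> finite_diameter K ->
  V `<=` K -> Lmeasurable V ->
  (exists l : \bar R,
      (fun e : R => vol (enlarge K V e)) @ 0^'+ --> l /\ (l < vol K)%E) ->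
  (forall t : R, Lmeasurable [set x | K x /\ t < f x]) ->
  (exists M : R, forall x, K x -> `|f x| <= M) ->
  (0 < cheeger K f V)%E.
Proof.
move=> cK [D0 KD] VK mV [l [hl lK]] _ [M hM].
have H : \forall e \near 0^'+, (vol (enlarge K V e) < vol K)%E.
  exact: hl _ (open_ereal_lt' lK).
have [e0 [e0p He0]] := filter_ex (filterI (nbhs_right_gt (0:R)) H).
have [y [Ky nE]] : exists y, K y /\ ~ enlarge K V e0 y.
  apply: contrapT => Hn.
  have KE : K `<=` enlarge K V e0.
    by move=> x Kx; apply: contrapT => nx; apply: Hn; exists x.
  by have := le_vol KE; rewrite leNgt He0.
have Vy v : V v -> e0 < dist2 y v.
  move=> Vv; rewrite ltNge; apply/negP => h; apply: nE; split => //.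
  apply: le_trans (ereal_inf_lbound _) _; first by exists v.
  by rewrite lee_fin.
set D := `|D0| + 1.
have D0p : 0 < D by rewrite /D ltr_pwDr // normr_ge0.
have KDy x : K x -> dist2 x y <= D.
  move=> Kx; apply: le_trans (KD x y Kx Ky) _.
  by rewrite /D (le_trans (ler_norm D0)) // lerDl.
have hK : (vol K < +oo)%E := vol_fin KDy.
have finK S : S `<=` K -> vol S \is a fin_num.
  move=> SK; rewrite ge0_fin_numE ?vol_ge0 //; exact: le_lt_trans (le_vol SK) hK.
have fb x : K x -> expR (- M) <= expR (- f x) <= expR M.
  move=> Kx; have := hM x Kx; rewrite ler_norml => /andP[h1 h2].
  by rewrite !ler_expR; apply/andP; split; lra.
set m1 := expR (- M); set m2 := expR M.
have m1p : 0 < m1 := expR_gt0 _.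
have m2p : 0 < m2 := expR_gt0 _.
set C := D ^+ 2 / e0 + D.
have Cp : 0 < C by rewrite /C ltr_wpDl // divr_ge0 ?sqr_ge0 // ltW.
set L := expR (- (2 * C * d%:R / D)).
set c := m1 / m2 * (L / C).
have cp : 0 < c by rewrite /c !mulr_gt0 ?invr_gt0 ?expR_gt0.
apply: (@lt_le_trans _ _ c%:E); first by rewrite lte_fin.
apply: (@le_trans _ _ (ereal_inf [set cheeger_ratio K f V e | e in `]0%R, D / 2[]));
  last first.
  by apply: ereal_sup_ubound; exists (D / 2) => //; rewrite /= in_itv /= andbT divr_gt0.
apply: le_ereal_inf_tmp => _ [eps /= epsI <-].
move: epsI; rewrite in_itv /= => /andP[ep eD].
rewrite /cheeger_ratio; apply: le_ereal_inf_tmp => _ [A [AV [mA muA]] <-].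
rewrite lee_fin.
set E := enlarge K A eps.
have AK : A `<=` K by move=> x Ax; exact: VK x (AV x Ax).
have AE : A `<=` E.
  move=> x Ax; split; first exact: AK.
  apply: le_trans (ereal_inf_lbound _) _; first by exists x.
  by rewrite dist2xx lee_fin ltW.
have EK : E `<=` K by move=> x [].
have EAK : E `\` A `<=` K by move=> x [[]].
have bnd S : S `<=` K -> [/\ int_expmf f S = (fine (int_expmf f S))%:E,
    m1 * fine (vol S) <= fine (int_expmf f S),
    fine (int_expmf f S) <= m2 * fine (vol S) & 0 <= fine (vol S)].
  move=> SK; have vSE := fineK (finK S SK).
  have hS : (vol S < +oo)%E by rewrite -vSE ltry.
  have l1 := int_lb m1p (fun x Sx => proj1 (andP (fb x (SK x Sx)))) hS.
  have u1 := int_ub m2p (fun x Sx => proj2 (andP (fb x (SK x Sx)))) hS.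
  have v0 : 0 <= fine (vol S) by rewrite fine_ge0 // vol_ge0.
  rewrite -vSE -EFinM in l1 u1.
  have IS : int_expmf f S \is a fin_num.
    rewrite ge0_fin_numE; last by apply: le_trans l1; rewrite lee_fin mulr_ge0 // ltW.
    exact: le_lt_trans u1 (ltry _).
  have ISE := fineK IS.
  rewrite -ISE lee_fin in l1; rewrite -ISE lee_fin in u1.
  by split => //; rewrite ISE.
have [IAE IAl IAu vA0] := bnd A AK.
have [IEAE IEAl _ _] := bnd (E `\` A) EAK.
have [IKE IKl _ vK0] := bnd K (@subset_refl _ K).
have IE : fine (int_expmf f E) =
    fine (int_expmf f A) + fine (int_expmf f (E `\` A)).
  rewrite (int_split f AE mA (le_lt_trans (le_vol EK) hK)) IAE IEAE.
  by rewrite -EFinD.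
have g := geom cK Ky e0p Vy D0p KDy AV VK mA ep (ltW eD).
rewrite -(fineK (finK A AK)) -(fineK (finK _ EAK)) -EFinM lee_fin in g.
move: muA; rewrite /mu_f IE.
set a := fine (int_expmf f A); set w := fine (int_expmf f (E `\` A)).
set z := fine (int_expmf f K); set vA := fine (vol A); set vB := fine (vol (E `\` A)).
move=> muA.
have z0 : 0 <= z by apply: le_trans IKl; rewrite mulr_ge0 // ltW.
have zp : 0 < z.
  rewrite lt_neqAle z0 andbT; apply/negP => /eqP z0'.
  by move: muA; rewrite -z0' invr0 mulr0 ltxx.
have ap : 0 < a by move: muA; rewrite pmulr_lgt0 // invr_gt0.
have -> : ((a + w) / z - a / z) / (eps * (a / z)) = w / (eps * a).
  by field; apply/and3P; split; rewrite gt_eqF.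
rewrite ler_pdivlMr ?mulr_gt0 //.
apply: (@le_trans _ _ (c * (eps * (m2 * vA)))).
  apply: ler_wpM2l; first exact: ltW.
  by apply: ler_wpM2l; [exact: ltW|].
have -> : c * (eps * (m2 * vA)) = m1 * (L / C * eps * vA).
  by rewrite /c; field; rewrite !gt_eqF.
apply: le_trans IEAl; apply: ler_wpM2l; [exact: ltW|exact: g].
Qed.
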